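(* Let $R$ be a unital ring with involution and let $a,b\in R$ both be core invertible. Then the following are equivalent: (1) $a\overset{\circledast}{\leq} b$; (2) $a\ {*}\!\leq b$ and $ba^{\circledast}b=a$; (3) $a\ {*}\!\leq b$ and $b^{\circledast}aa^{\circledast}=a^{\circledast}$; (4) $a\ {*}\!\leq b$ and $b^{\circledast}ab^{\circledast}=a^{\circledast}$; (5) $a\leq_{\#} b$ and $ba^{\circledast}b=a$; (6) $a\leq_{\#} b$ and $a^{\circledast}ab^{\circledast}=a^{\circledast}$.
   Context: $R$ is a ring with identity and an involution $x\mapsto x^{*}$. An element $a\in R$ is core invertible if there exists $x\in R$ with $axa=a$, $xR=aR$ and $Rx=Ra^{*}$; such $x$ is unique, called the core inverse of $a$ and denoted $a^{\circledast}$. Every core invertible element $a$ is group invertible, where the group inverse $a^{\#}$ is the unique $x$ with $axa=a$, $xax=x$, $ax=xa$. For $a$ core invertible and $b\in R$, $a\overset{\circledast}{\leq} b$ means $a^{\circledast}a=a^{\circledast}b$ and $aa^{\circledast}=ba^{\circledast}$. The left star partial order: $a\ {*}\!\leq b$ means $a^{*}a=a^{*}b$ and $aR\subseteq bR$. The right sharp partial order (for group invertible $a$): $a\leq_{\#} b$ means $aa^{\#}=ba^{\#}$ and $Ra\subseteq Rb$. *)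

(* Defs.v *)
From HB Require Import structures.
From mathcomp Require Import all_boot all_order all_algebra.
Set Implicit Arguments. Unset Strict Implicit. Unset Printing Implicit Defensive.
Import GRing.Theory.
Local Open Scope ring_scope.

Definition involution (R : pzRingType) (s : R -> R) : Prop :=
  [/\ forall x y, s (x + y) = s x + s y,
      forall x y, s (x * y) = s y * s x
    & forall x, s (s x) = x].

Definition rsub (R : pzRingType) (x y : R) : Prop := exists u, x = y * u. (* xR ⊆ yR *)
Definition lsub (R : pzRingType) (x y : R) : Prop := exists u, x = u * y. (* Rx ⊆ Ry *)

Definition is_core_inverse (R : pzRingType) (s : R -> R) (a x : R) : Prop :=
  [/\ a * x * a = a, rsub x a /\ rsub a x & lsub x (s a) /\ lsub (s a) x].

Definition is_group_inverse (R : pzRingType) (a x : R) : Prop :=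
  [/\ a * x * a = a, x * a * x = x & a * x = x * a].

Definition core_le (R : pzRingType) (a ca b : R) : Prop :=
  ca * a = ca * b /\ a * ca = b * ca.

Definition lstar_le (R : pzRingType) (s : R -> R) (a b : R) : Prop :=
  s a * a = s a * b /\ rsub a b.

Definition rsharp_le (R : pzRingType) (a ga b : R) : Prop :=
  a * ga = b * ga /\ lsub a b.

(* Main.v *)
Require Import Defs.
From HB Require Import structures.
From mathcomp Require Import all_boot all_order all_algebra.
Local Open Scope ring_scope.
Import GRing.Theory.
Set Implicit Arguments. Unset Strict Implicit.

Section Core.
Variables (R : pzRingType) (s : R -> R).
Hypothesis inv : involution s.

Lemma sM x y : s (x * y) = s y * s x. Proof. by case: inv. Qed.
Lemma sK x : s (s x) = x. Proof. by case: inv. Qed.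

Variables (a x : R).
Hypothesis cx : is_core_inverse s a x.

Lemma F1 : a * x * a = a. Proof. by case: cx. Qed.
Lemma Fw : exists w, x = w * s a. Proof. by case: cx => _ _ [[w ->] _]; exists w. Qed.
Lemma Ft : exists t, s a = t * x. Proof. by case: cx => _ _ [_ [t ->]]; exists t. Qed.
Lemma Fu : exists u, x = a * u. Proof. by case: cx => _ [[u ->] _] _; exists u. Qed.
Lemma Fv : exists v, a = x * v. Proof. by case: cx => _ [_ [v ->]] _; exists v. Qed.

Lemma F3 : s (a * x) = a * x.
Proof.
have [w ew] := Fw; have [t et] := Ft.
have h : s (a * x) = a * (s w * t * x).
  by rewrite sM {1}ew sM sK et !mulrA.
have h2 : a * x * s (a * x) = s (a * x) by rewrite h !mulrA F1.
have := congr1 s h2; rewrite sM sK h2 => ->; by [].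
Qed.

Lemma F5 : s a * a * x = s a.
Proof. by rewrite -mulrA -F3 -sM F1. Qed.

Lemma F2 : x * a * x = x.
Proof. have [w ew] := Fw. by rewrite {1}ew -!mulrA (mulrA (s a)) F5. Qed.

Lemma F4 : x * a * a = a.
Proof. have [v ev] := Fv. by rewrite {2}ev mulrA F2 -ev. Qed.

Lemma F6 : a * x * x = x.
Proof. have [u eu] := Fu. by rewrite {2}eu mulrA F1 -eu. Qed.

End Core.

Theorem theorem3p2 (R : pzRingType) (s : R -> R) (a b ca cb ga : R) :
  involution s ->
  is_core_inverse s a ca -> is_core_inverse s b cb ->
  is_group_inverse a ga ->
  [/\ (core_le a ca b <-> lstar_le s a b /\ b * ca * b = a),
      (core_le a ca b <-> lstar_le s a b /\ cb * a * ca = ca),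
      (core_le a ca b <-> lstar_le s a b /\ cb * a * cb = ca),
      (core_le a ca b <-> rsharp_le a ga b /\ b * ca * b = a)
    & (core_le a ca b <-> rsharp_le a ga b /\ ca * a * cb = ca)].
Proof.
move=> iv ha hb [g1 g2 g3].
rename ca into x; rename cb into y; rename ga into g.
have a1 := F1 ha; have a2 := F2 iv ha; have a3 := F3 iv ha; have a4 := F4 iv ha.
have a5 := F5 iv ha; have a6 := F6 ha.
have b1 := F1 hb; have b2 := F2 iv hb; have b3 := F3 iv hb; have b4 := F4 iv hb.
have [w ew] := Fw ha; have [t et] := Ft ha.
have xbL : s a * a = s a * b -> x * b = x * a.
  by move=> h; rewrite ew -!mulrA h.
have byaL : rsub a b -> b * y * a = a.
  by move=> [u eu]; rewrite eu !mulrA b1.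
have xayL : s a * a = s a * b -> rsub a b -> x * a * y = x.
  move=> h1 h2; have e : s a * b * y = s a.
    by rewrite -mulrA -b3 -(sM iv); have -> := byaL h2.
  by rewrite ew -!mulrA (mulrA (s a)) h1 e.
have c2l : core_le a x b -> lstar_le s a b.
  move=> [h1 h2]; split; last by exists (x * a); rewrite mulrA -h2 a1.
  by rewrite et -!mulrA h1.
have c2bxb : core_le a x b -> b * x * b = a.
  by move=> [h1 h2]; rewrite -h2 -mulrA -h1 mulrA a1.
have c2r : core_le a x b -> rsharp_le a g b.
  move=> [h1 h2]; split; last by exists (a * x); rewrite -mulrA -h1 mulrA a1.
  have eg : g = x * a * g.
    have e1 : g = a * g * g by rewrite g3 g2.
    by rewrite {2}e1 !mulrA a4 -e1.
  by rewrite eg !mulrA -h2.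
have gax : rsharp_le a g b -> b * x = a * x.
  move=> [h1 _]; have [u eu] := Fu ha.
  have e : x = g * a * x by rewrite {2}eu mulrA -g3 g1 -eu.
  by rewrite e !mulrA -h1.
split.
- split; first by move=> h; split; [apply: c2l | apply: c2bxb].
  move=> [[h1 h2] h3]; split; first by rewrite xbL.
  by rewrite -{1}h3 -(mulrA b x b) (xbL h1) -mulrA a2.
- split.
    move=> h; split; first exact: c2l.
    case: h => [h1 h2]. have e : x = b * x * x by rewrite -h2 a6.
    by rewrite -mulrA h2 {1}e !mulrA b4 -e.
  move=> [[h1 h2] h3]; split; first by rewrite xbL.
  by rewrite -{2}h3 !mulrA byaL.
- split.
    move=> h; have [h1 h2] := c2l h; split => //.
    have yax : y * a * x = x.
      case: h => [k1 k2]. have e : x = b * x * x by rewrite -k2 a6.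
      by rewrite -mulrA k2 {1}e !mulrA b4 -e.
    case: h => [k1 k2].
    have e : a = a * x * b by rewrite -mulrA -k1 mulrA a1.
    by rewrite {1}e !mulrA yax -k1 (xayL h1 h2).
  move=> [[h1 h2] h3]; split; first by rewrite xbL.
  have e1 : a * y = b * x by rewrite -h3 !mulrA (byaL h2).
  have -> : a * x = (a * y) * (a * y) by rewrite -h3 !mulrA.
  by rewrite e1 -mulrA (mulrA x b x) (xbL h1) a2.
- split.
    move=> h; split; [exact: c2r | exact: c2bxb].
  move=> [h1 h3]; have e := gax h1; split; last by rewrite e.
  have -> : x * b = x * (b * x * b) by rewrite -{1}a2 -(mulrA x a x) -e !mulrA.
  by rewrite h3.
- split.
    move=> h; have [h1 h2] := c2l h; split; [exact: c2r | exact: xayL].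
  move=> [[h1 [u eu]] h3]; have e := gax (conj h1 (ex_intro _ u eu)).
  split; last by rewrite e.
  have e2 : a * y * b = a by rewrite eu -!mulrA (mulrA b y b) b1.
  by rewrite -{2}h3 -!mulrA (mulrA a y b) e2.
Qed.
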